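(* Consider a deterministic two-player discounted game on $\vec{\mathcal G}=([n],E)$, $m=|E|$. Fix $r\in\mathbb R^m$ and $\gamma\in(0,1)$, and let $\tilde r\in\mathbb R^m$, $\varepsilon>0$ satisfy $\|r-\tilde r\|_\infty\le\varepsilon$. Put $\delta=\frac{2\varepsilon}{(1-\gamma)\gamma^n}$. Let $(\sigma,\tau)$ be any pair of policies and $E^{\sigma,\tau}$ the set of edges they use. Define $r^{(1)},r^{(2)}\in\mathbb R^m$ by $r^{(1)}_{ij}=r^{(2)}_{ij}=\tilde r_{ij}$ if $(i,j)\in E^{\sigma,\tau}$, and $r^{(1)}_{ij}=\tilde r_{ij}-\delta$, $r^{(2)}_{ij}=\tilde r_{ij}+\delta$ otherwise. If $(\sigma,\tau)$ is a pair of optimal policies in the discounted games with discount factor $\gamma$ and weights $r^{(1)}$ and $r^{(2)}$, then $(\sigma,\tau)$ is a pair of optimal policies in the discounted game with discount factor $\gamma$ and weights $r$.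
   Context: The graph has no multiple edges, each vertex has an outgoing edge, $[n]=V_{\max}\uplus V_{\min}$, weights $r\in\mathbb R^E$. Policies $\sigma:V_{\max}\to[n]$, $\tau:V_{\min}\to[n]$ with $(i,\sigma(i)),(i,\tau(i))\in E$; $E^{\sigma,\tau}=\{(i,\sigma(i))\}\cup\{(i,\tau(i))\}$. Discounted game with factor $\gamma$: along the play $i_0,i_1,\dots$ Max receives $(1-\gamma)\sum_{t\ge0}\gamma^t r_{i_ti_{t+1}}$ (Max maximizes, Min minimizes). Its value $\lambda^{(\gamma)}\in\mathbb R^n$ is the unique solution of $\lambda^{(\gamma)}_i=\max_{(i,j)\in E}\{(1-\gamma)r_{ij}+\gamma\lambda^{(\gamma)}_j\}$ for $i\in V_{\max}$ and $\lambda^{(\gamma)}_i=\min_{(i,j)\in E}\{(1-\gamma)r_{ij}+\gamma\lambda^{(\gamma)}_j\}$ for $i\in V_{\min}$; a pair $(\sigma,\tau)$ is optimal iff $\sigma(i)$ attains the maximum for every $i\in V_{\max}$ and $\tau(i)$ attains the minimum for every $i\in V_{\min}$ (equivalently, each policy guarantees the value from every initial state against any policy of the opponent). *)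

(* Defs.v *)
From mathcomp Require Import all_boot all_order all_algebra.
From mathcomp Require Import reals.
Set Implicit Arguments. Unset Strict Implicit. Unset Printing Implicit Defensive.
Import Order.TTheory GRing.Theory Num.Theory.
Local Open Scope ring_scope.

(* A deterministic two-player game on the graph ([n], E): vertices 'I_n,
   edge relation E : rel 'I_n (a relation, so no multiple edges),
   isMax i <=> i \in V_max (V_min is the complement).
   Weights r are given as a function 'I_n -> 'I_n -> R; only the values on
   edges (i,j) with E i j matter (this is r \in R^E). *)

Section Game.
Variable R : realType.
Variable n : nat.
Variable E : rel 'I_n.
Variable isMax : pred 'I_n.

Definition max_policy (sigma : 'I_n -> 'I_n) : Prop :=
  forall i, isMax i -> E i (sigma i).
Definition min_policy (tau : 'I_n -> 'I_n) : Prop :=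
  forall i, ~~ isMax i -> E i (tau i).

Definition in_Est (sigma tau : 'I_n -> 'I_n) (i j : 'I_n) : bool :=
  (isMax i && (j == sigma i)) || (~~ isMax i && (j == tau i)).

(* lambda solves the Shapley equation of the discounted game:
   lambda_i = max_{(i,j) in E} ((1-g) r_ij + g lambda_j) for i in V_max,
   lambda_i = min_{(i,j) in E} ((1-g) r_ij + g lambda_j) for i in V_min
   (max/min over the finite nonempty set of out-edges, written out). *)
Definition is_disc_value (g : R) (r : 'I_n -> 'I_n -> R) (lam : 'I_n -> R) : Prop :=
  forall i,
    (exists2 j, E i j & lam i = (1 - g) * r i j + g * lam j) /\
    (forall j, E i j ->
       if isMax i then (1 - g) * r i j + g * lam j <= lam i
       else lam i <= (1 - g) * r i j + g * lam j).

(* The value (solution of the Shapley equation) is unique for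
   0 < g < 1, so "exists lam" is the same as "for the value lam". *)
Definition optimal_pair (g : R) (r : 'I_n -> 'I_n -> R)
    (sigma tau : 'I_n -> 'I_n) : Prop :=
  max_policy sigma /\ min_policy tau /\
  exists lam, is_disc_value g r lam /\
    (forall i, isMax i -> lam i = (1 - g) * r i (sigma i) + g * lam (sigma i)) /\
    (forall i, ~~ isMax i -> lam i = (1 - g) * r i (tau i) + g * lam (tau i)).

End Game.

(* Main.v *)
Require Import Defs.
From mathcomp Require Import all_boot all_order all_algebra.
From mathcomp Require Import reals ring lra.
Import Order.TTheory GRing.Theory Num.Theory.
Local Open Scope ring_scope.

Lemma bound (R : realType) n (g e : R) (f : 'I_n -> 'I_n) (d a : 'I_n -> R) :
  0 < g -> g < 1 -> (forall i, d i = a i + g * d (f i)) ->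
  (forall i, `|a i| <= (1-g)*e) -> forall i, `|d i| <= e.
Proof.
move=> g0 g1 Hd Ha i.
have [k _ Hk] := @real_arg_maxP R _ i predT (fun j => `|d j|) isT
   (fun j _ => normr_real (d j)).
have Hi := Hk i isT.
set M := `|d k| in Hi *.
have HM : M <= (1-g)*e + g*M.
  rewrite /M {1}Hd; apply: le_trans (ler_normD _ _) _.
  apply: lerD; first exact: Ha.
  rewrite normrM (ger0_norm (ltW g0)); rewrite ler_pM2l //.
  exact: Hk.
have : M <= e by nra.
exact: le_trans.
Qed.

Lemma exist_fix (R : realType) n (g : R) (f : 'I_n -> 'I_n) (b : 'I_n -> R) :
  0 < g -> g < 1 -> exists l : 'I_n -> R, forall i, l i = b i + g * l (f i).
Proof.
move=> g0 g1.
pose P : 'M[R]_n := \matrix_(i, j) ((j == f i)%:R).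
have HP : forall p (V : 'M[R]_(n,p)) i k, (P *m V) i k = V (f i) k.
  move=> p V i k; rewrite !mxE (bigD1 (f i)) //= mxE eqxx mul1r big1 ?addr0 //.
  by move=> j /negPf Hj; rewrite mxE Hj mul0r.
pose A := 1%:M - g *: P.
have HA : forall p (V : 'M_(n,p)) i k, (A *m V) i k = V i k - g * V (f i) k.
  move=> p V i k; rewrite mulmxBl mul1mx -scalemxAl -HP.
  by rewrite !mxE.
have Hu : A \in unitmx.
  rewrite -unitmx_tr -row_free_unit -kermx_eq0; apply/eqP.
  have HK := mulmx_ker A^T.
  move: (kermx A^T) HK => K HK.
  apply/trmx_inj; rewrite trmx0; apply/matrixP => i k.
  have H0 : forall j, (K^T) j k = 0 + g * K^T (f j) k.
    move=> j; have := congr1 (fun M => (M^T) j k) HK.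
    rewrite /= trmx_mul trmxK HA => H.
    by rewrite add0r; apply/eqP; rewrite -subr_eq0 H !mxE.
  have := @bound R n g 0 f _ (fun _ => 0) g0 g1 H0 (fun _ => ltac:(by rewrite normr0 mulr0)) i.
  rewrite normr_le0 => /eqP ->; by rewrite mxE.
pose x := invmx A *m (\col_i b i).
have Hx : A *m x = \col_i b i by rewrite /x mulmxA mulmxV // mul1mx.
exists (fun i => x i ord0) => i.
have := congr1 (fun M : 'cV[R]_n => M i ord0) Hx; rewrite /= HA mxE => <-.
by rewrite subrK.
Qed.

Theorem mainTheorem19 (R : realType) (n : nat) (E : rel 'I_n) (isMax : pred 'I_n)
  (Hout : forall i : 'I_n, exists j, E i j)
  (r rt : 'I_n -> 'I_n -> R) (g eps : R)
  (Hg0 : 0 < g) (Hg1 : g < 1) (Heps : 0 < eps)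
  (Hclose : forall i j, E i j -> `|r i j - rt i j| <= eps)
  (sigma tau : 'I_n -> 'I_n)
  (Hsig : max_policy E isMax sigma) (Htau : min_policy E isMax tau) :
  let delta := 2 * eps / ((1 - g) * g ^+ n) in
  let r1 := fun i j => if in_Est isMax sigma tau i j then rt i j else rt i j - delta in
  let r2 := fun i j => if in_Est isMax sigma tau i j then rt i j else rt i j + delta in
  optimal_pair E isMax g r1 sigma tau ->
  optimal_pair E isMax g r2 sigma tau ->
  optimal_pair E isMax g r sigma tau.
Proof.
move=> delta r1 r2 [_ [_ [l1 [Hv1 [Hm1 Hn1]]]]] [_ [_ [l2 [Hv2 [Hm2 Hn2]]]]].
pose nx i := if isMax i then sigma i else tau i.
have HE : forall i, E i (nx i).
  by move=> i; rewrite /nx; case: ifP => h; [apply: Hsig | apply: Htau]; rewrite ?h.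
have [l Hl] := @exist_fix R n g nx (fun i => (1-g) * r i (nx i)) Hg0 Hg1.
have Hl1 : forall i, l1 i = (1-g) * rt i (nx i) + g * l1 (nx i).
  move=> i; rewrite /nx; case: ifP => h; [rewrite Hm1 // | rewrite Hn1 ?h //];
  by rewrite /r1 /in_Est h eqxx /= ?orbT.
have Hl2 : forall i, l2 i = (1-g) * rt i (nx i) + g * l2 (nx i).
  move=> i; rewrite /nx; case: ifP => h; [rewrite Hm2 // | rewrite Hn2 ?h //];
  by rewrite /r2 /in_Est h eqxx /= ?orbT.
have g1p : 0 < 1 - g by rewrite subr_gt0.
have Hdist : forall lk : 'I_n -> R, (forall i, lk i = (1-g) * rt i (nx i) + g * lk (nx i)) ->
    forall i, `|l i - lk i| <= eps.
  move=> lk Hk.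
  apply: (@bound R n g eps nx _ (fun i => (1-g) * (r i (nx i) - rt i (nx i))) Hg0 Hg1).
  - by move=> i; rewrite Hl Hk; ring.
  - move=> i; rewrite normrM (ger0_norm (ltW g1p)) ler_pM2l //; exact: Hclose (HE i).
have Hd1 := Hdist l1 Hl1.
have Hd2 := Hdist l2 Hl2.
have gn : 0 < g ^+ n by rewrite exprn_gt0.
have Hdel : 2 * eps <= (1-g) * delta.
  have -> : (1-g) * delta = 2 * eps / g ^+ n.
    rewrite /delta; field; apply/andP; split; rewrite ?lt0r_neq0 //.
  rewrite ler_pdivlMr // ler_piMr ?exprn_ile1 ?ltW //.
  by rewrite mulr_gt0.
split; first done; split; first done.
exists l; split; [|split].
- move=> i; split; first by exists (nx i).
  move=> j Ej.
  have := Hd1 i; rewrite ler_norml => /andP[a1 a2].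
  have := Hd1 j; rewrite ler_norml => /andP[b1 b2].
  have := Hd2 i; rewrite ler_norml => /andP[c1 c2].
  have := Hd2 j; rewrite ler_norml => /andP[d1 d2].
  have := Hclose i j Ej; rewrite ler_norml => /andP[e1 e2].
  case Hi: (isMax i).
  + case: (eqVneq j (sigma i)) => [->|hj]; first by rewrite /= [l i]Hl /nx Hi.
    have := (Hv2 i).2 j Ej; rewrite Hi /r2 /in_Est Hi (negbTE hj) /= => H.
    have h1 : (1-g) * r i j <= (1-g) * rt i j + (1-g) * eps.
      by rewrite -mulrDr ler_pM2l // -lerBlDl.
    have h2 : g * l j <= g * l2 j + g * eps.
      by rewrite -mulrDr ler_pM2l // -lerBlDl.
    rewrite mulrDr in H.
    lra.
  + case: (eqVneq j (tau i)) => [->|hj]; first by rewrite /= [l i]Hl /nx Hi.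
    have := (Hv1 i).2 j Ej; rewrite Hi /r1 /in_Est Hi (negbTE hj) /= => H.
    have h1 : (1-g) * rt i j - (1-g) * eps <= (1-g) * r i j.
      by rewrite -mulrBr ler_pM2l //; lra.
    have h2 : g * l1 j - g * eps <= g * l j.
      by rewrite -mulrBr ler_pM2l //; lra.
    rewrite mulrBr in H.
    lra.
- by move=> i Hi; rewrite Hl /nx Hi.
- by move=> i Hi; rewrite Hl /nx (negbTE Hi).
Qed.
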